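(* Let $m\in\mathbb{Z}_2\setminus\{0\}$ and $f(x)=x^2+(1-4m)x$ on $\mathbb{Z}_2$. Then $f$ has the two fixed points $0$ and $4m$, $f(1+2\mathbb{Z}_2)\subset 2\mathbb{Z}_2$, and $$2\mathbb{Z}_2=\{0,4m\}\sqcup E_1\sqcup E_2\sqcup E_3,$$ where $$E_1=\bigsqcup_{2\le n<v_2(m)+3}\big(2^{n-1}+2^n\mathbb{Z}_2\big)-\{\text{I-}[n-2]\},$$ $$E_2=\bigsqcup_{n>v_2(m)+3}\big(2^{n-1}+2^n\mathbb{Z}_2\big)-\{\text{I-}[v_2(m)+1]\},$$ $$E_3=\bigsqcup_{n>v_2(m)+3}\big(4m+2^{n-1}+2^n\mathbb{Z}_2\big)-\{\text{I-}[v_2(m)+1]\}.$$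
   Context: $v_2$ is the $2$-adic valuation. For $n\ge1$, $f_n:\mathbb{Z}/2^n\mathbb{Z}\to\mathbb{Z}/2^n\mathbb{Z}$ is the induced map $f_n(x\bmod 2^n)=f(x)\bmod 2^n$. A cycle of $f_n$ (at level $n$) of length $k$ is a tuple $\sigma=(x_1,\dots,x_k)$ of distinct elements with $f_n(x_i)=x_{i+1}$ ($i<k$), $f_n(x_k)=x_1$. The set $X_\sigma=\{y\in\mathbb{Z}/2^{n+1}\mathbb{Z}: y\bmod 2^n\in\sigma\}$ is $f_{n+1}$-invariant; the cycles of $f_{n+1}$ in $X_\sigma$ are the lifts of $\sigma$. $\sigma$ grows if $X_\sigma$ is a single cycle of length $2k$, and splits if $X_\sigma$ is the union of two cycles of length $k$. For $k\ge0$, $\sigma$ ''splits $k$ times and then its lifts grow forever'' means: every cycle at level $n+j$, $0\le j\le k-1$, lying above $\sigma$ (i.e. reducing mod $2^n$ into $\sigma$) splits, and every cycle at any level $\ge n+k$ lying above $\sigma$ grows. A ball $F=x+2^n\mathbb{Z}_2$ with $(x\bmod 2^n)$ a fixed point (1-cycle) of $f_n$ is of type I-$[k]$ if this 1-cycle splits $k$ times and then its lifts grow forever (then $F$ is a disjoint union of $2^k$ balls of radius $2^{-n-k}$, each $f$-invariant with $f$ minimal on it). The notation $E=\bigsqcup_{n\in J}F_n-\{\text{I-}[k]\}$ means $E$ is the disjoint union of the sets $F_n$, each of which is of type I-$[k]$ (with $k$ possibly depending on $n$ as indicated). *)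

(* Defs.v *)
From mathcomp Require Import all_boot all_algebra.
Set Implicit Arguments. Unset Strict Implicit. Unset Printing Implicit Defensive.
Import GRing.Theory Num.Theory.

(* Z_2 : a 2-adic integer is its (infinite) stream of binary digits. *)
Definition Z2 := nat -> bool.

Definition res (n : nat) (x : Z2) : nat := \sum_(i < n) (x i) * 2 ^ i.

Definition Z2zero : Z2 := fun _ => false.

Definition mul4 (m : Z2) : Z2 := fun i => if i < 2 then false else m (i - 2).

Definition is_v2 (m : Z2) (v : nat) : Prop := m v = true /\ forall i, i < v -> m i = false.

Definition fn (m : Z2) (n : nat) (a : nat) : nat :=
  `|(((a%:Z) ^+ 2 + (1 - 4 * (res n m)%:Z) * a%:Z) %% (2 ^ n)%:Z)%Z|%N.

(* f : Z_2 -> Z_2, f(x) = x^2 + (1-4m) x : its i-th digit is read off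
   f(x) mod 2^(i+1) = f_(i+1)(x mod 2^(i+1)). *)
Definition fZ2 (m : Z2) (x : Z2) : Z2 :=
  fun i => odd (fn m i.+1 (res i.+1 x) %/ 2 ^ i).

Definition exact_period (g : nat -> nat) (k y : nat) : Prop :=
  0 < k /\ iter k g y = y /\ forall j, 0 < j < k -> iter j g y <> y.

(* The cycle sigma of f_n through a (of length k) at level n: points iter j (f_n) a, j<k.
   X_sigma at level n+1: residues y mod 2^(n+1) reducing mod 2^n into sigma. *)
Definition in_X (m : Z2) (n a k y : nat) : Prop :=
  y < 2 ^ n.+1 /\ exists2 j, j < k & y %% 2 ^ n = iter j (fn m n) a.

(* sigma grows: X_sigma is a single cycle of length 2k (every point of X_sigma,
   which has 2k elements, has exact period 2k under f_(n+1)). *)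
Definition grows (m : Z2) (n a k : nat) : Prop :=
  forall y, in_X m n a k y -> exact_period (fn m n.+1) (2 * k) y.

(* sigma splits: X_sigma is the union of two cycles of length k
   (every point of X_sigma has exact period k under f_(n+1)). *)
Definition splits (m : Z2) (n a k : nat) : Prop :=
  forall y, in_X m n a k y -> exact_period (fn m n.+1) k y.

Definition above_fixed (m : Z2) (N b l n a : nat) : Prop :=
  forall j, j < l -> iter j (fn m N) b %% 2 ^ n = a.

Definition ball (n a : nat) (x : Z2) : Prop := res n x = a.

(* The ball a + 2^n Z_2 is of type I-[k]: a is a fixed point of f_n, and this
   1-cycle splits k times and then its lifts grow forever. *)
Definition typeI (m : Z2) (n a k : nat) : Prop :=
  [/\ a < 2 ^ n, fn m n a = a,
      (forall j b l, j < k -> b < 2 ^ (n + j) -> exact_period (fn m (n + j)) l b ->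
         above_fixed m (n + j) b l n a -> splits m (n + j) b l) &
      (forall N b l, n + k <= N -> b < 2 ^ N -> exact_period (fn m N) l b ->
         above_fixed m N b l n a -> grows m N b l)].

Inductive piece_lbl := L04 | L1 of nat | L2 of nat | L3 of nat.

Definition c1 (n : nat) : nat := 2 ^ n.-1.
Definition c3 (m : Z2) (n : nat) : nat := (4 * res n m + 2 ^ n.-1) %% 2 ^ n.

Definition valid_lbl (v : nat) (l : piece_lbl) : Prop :=
  match l with
  | L04 => True
  | L1 n => 2 <= n < v + 3
  | L2 n => v + 3 < n
  | L3 n => v + 3 < n
  end.

Definition piece (m : Z2) (l : piece_lbl) (x : Z2) : Prop :=
  match l with
  | L04 => x = Z2zero \/ x = mul4 m
  | L1 n => ball n (c1 n) x
  | L2 n => ball n (c1 n) x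
  | L3 n => ball n (c3 m n) x
  end.

(* Main.v *)
Require Import Defs.
From mathcomp Require Import all_boot all_algebra.
From mathcomp Require Import ring zify.
From Stdlib Require Import FunctionalExtensionality Classical.
Set Implicit Arguments. Unset Strict Implicit. Unset Printing Implicit Defensive.
Import GRing.Theory Num.Theory.
Local Open Scope ring_scope.

Lemma pow2z e : Posz (2 ^ e) = (2:int) ^+ e.
Proof. elim: e => // e IH. by rewrite expnS PoszM IH exprS. Qed.

Definition cg (d x y : int) : Prop := exists q : int, x - y = q * d.
Definition vz (e : nat) (z : int) : Prop := exists u : int, z = (2:int) ^+ e * (2 * u + 1).
Definition FF (M x : int) : int := x ^+ 2 + (1 - 4 * M) * x.

Lemma cg_refl d x : cg d x x.
Proof. exists 0; ring. Qed.
Lemma cg_sym d x y : cg d x y -> cg d y x.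
Proof. by case=> q h; exists (-q); rewrite -[y - x]opprB h; ring. Qed.
Lemma cg_trans d x y z : cg d x y -> cg d y z -> cg d x z.
Proof.
case=> q h; case=> q' h'; exists (q + q').
have -> : x - z = (x - y) + (y - z) by ring.
by rewrite h h'; ring.
Qed.
Lemma cg_add d a b c e : cg d a b -> cg d c e -> cg d (a + c) (b + e).
Proof.
case=> q h; case=> q' h'; exists (q + q').
have -> : a + c - (b + e) = (a - b) + (c - e) by ring.
by rewrite h h'; ring.
Qed.
Lemma cg_mulc d c a b : cg d a b -> cg d (c * a) (c * b).
Proof.
case=> q h; exists (c * q).
have -> : c * a - c * b = c * (a - b) by ring.
by rewrite h; ring.
Qed.
Lemma cg_opp d a b : cg d a b -> cg d (- a) (- b).
Proof.
case=> q h; exists (- q).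
have -> : - a - - b = - (a - b) by ring.
by rewrite h; ring.
Qed.
Lemma cg_dvd d e x y : cg (d * e) x y -> cg d x y.
Proof. by case=> q h; exists (q * e); rewrite h; ring. Qed.
Lemma cg_pow (e e' : nat) x y : (e' <= e)%N -> cg (2 ^+ e) x y -> cg (2 ^+ e') x y.
Proof.
move=> h [q hq]; exists (q * 2 ^+ (e - e')); rewrite hq.
by rewrite -{1}(subnK h) exprD; ring.
Qed.

Lemma FF_cg M d x y : cg d x y -> cg d (FF M x) (FF M y).
Proof.
case=> q h; exists (q * (x + y + 1 - 4 * M)).
have -> : FF M x - FF M y = (x - y) * (x + y + 1 - 4 * M) by rewrite /FF; ring.
by rewrite h; ring.
Qed.

Lemma iter_cg (G : int -> int) d :
  (forall a b, cg d a b -> cg d (G a) (G b)) ->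
  forall t a b, cg d a b -> cg d (iter t G a) (iter t G b).
Proof. move=> HG; elim=> //= t IH a b h; apply: HG; exact: IH. Qed.

Lemma lemD M t : forall x y, (exists c, x = 2 * c) -> (exists c, y - x = 4 * c) ->
  exists q, iter t (FF M) y - iter t (FF M) x = (y - x) * (1 + 4 * q).
Proof.
elim: t => [|t IH] x y [cx hx] [c hc].
  by exists 0; rewrite /=; ring.
rewrite !iterSr.
have hy : y = 2 * cx + 4 * c.
  have -> : y = (y - x) + x by ring.
  by rewrite hc hx; ring.
have e1 : exists c0, FF M x = 2 * c0.
  by exists (cx * (2 * cx + 1 - 4 * M)); rewrite /FF hx; ring.
have e2 : exists c0, FF M y - FF M x = 4 * c0.
  exists (c * (4 * cx + 4 * c + 1 - 4 * M)).
  by rewrite /FF hy hx; ring.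
have [q hq] := IH _ _ e1 e2.
exists ((cx + c - M) + q + 4 * (cx + c - M) * q).
rewrite hq.
have -> : FF M y - FF M x = (y - x) * (x + y + 1 - 4 * M) by rewrite /FF; ring.
rewrite hy hx; ring.
Qed.

Lemma core M x r : (2 <= r)%N -> (exists c, x = 2 * c) -> vz r (x * (x - 4 * M)) ->
  forall j, vz (r + j) (iter (2 ^ j) (FF M) x - x).
Proof.
move=> hr hx [u hu]; elim=> [|j [w hw]].
  by exists u; rewrite addn0 /= -hu /FF; ring.
rewrite expnS mul2n -addnn iterD.
set y := iter (2 ^ j) (FF M) x.
have h4 : exists c, y - x = 4 * c.
  exists ((2:int) ^+ (r + j - 2) * (2 * w + 1)).
  rewrite hw -(subnK (_ : (2 <= r + j)%N)); last by lia.
  rewrite exprD (_ : (2:int) ^+ 2 = 4); last by rewrite expr2.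
  by rewrite subnK; [ring | lia].
have [q hq] := lemD M (2 ^ j) hx h4.
exists (2 * u * 0 + 2 * w * q + w + q).
have -> : iter (2 ^ j) (FF M) y - x
   = (iter (2 ^ j) (FF M) y - iter (2 ^ j) (FF M) x) + (y - x) by rewrite /y; ring.
rewrite hq hw addnS exprS; ring.
Qed.
Section P2.
Variable (G : int -> int) (d x : int).
Hypothesis HG : forall a b, cg d a b -> cg d (G a) (G b).
Let S t := cg d (iter t G x) x.

Lemma S_add a b : S a -> S b -> S (a + b).
Proof.
rewrite /S iterD => ha hb; apply: cg_trans ha.
exact: iter_cg.
Qed.
Lemma S_sub a b : S a -> S (b + a) -> S b.
Proof.
rewrite /S iterD => ha hab; apply: cg_trans hab.
apply: cg_sym; exact: iter_cg.
Qed.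
Lemma S_mul q a : S a -> S (q * a).
Proof.
move=> ha; elim: q => [|q IH]; first by rewrite mul0n /S /=; exact: cg_refl.
by rewrite mulSn; apply: S_add.
Qed.

Lemma no_small_period s :
  S (2 ^ s) -> (0 < s)%N -> ~ S (2 ^ s.-1) ->
  forall t, (0 < t < 2 ^ s)%N -> ~ S t.
Proof.
move=> H2 s0 Hn.
have H : forall n t, (t <= n)%N -> (0 < t < 2 ^ s)%N -> ~ S t.
  elim=> [|n IH] t tn /andP[t0 ts] Ht; first by lia.
  have Hr : S (2 ^ s %% t).
    apply: (@S_sub (2 ^ s %/ t * t)); first exact: S_mul.
    by rewrite addnC -divn_eq.
  case r0: (2 ^ s %% t == 0)%N.
    have : (t %| 2 ^ s)%N by [].
    move/(dvdn_pfactor t s (isT : prime 2)) => [i ilt ti].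

    have is1 : (i < s)%N.
      rewrite ti in ts; by rewrite ltn_exp2l in ts.
    apply: Hn.
    have -> : (2 ^ s.-1 = 2 ^ (s.-1 - i) * 2 ^ i)%N by rewrite -expnD subnK //; lia.
    rewrite -ti; exact: S_mul.
  have h1 := ltn_pmod (2 ^ s) t0.
  have h2 : (2 ^ s %% t <= n)%N by lia.
  have h3 : (0 < 2 ^ s %% t < 2 ^ s)%N by apply/andP; split; lia.
  exact: (IH _ h2 h3 Hr).
move=> t ht; exact: (H t).
Qed.
End P2.

Lemma exact_period_uniq (g : nat -> nat) l l' y :
  exact_period g l y -> exact_period g l' y -> l = l'.
Proof.
case=> l0 [hl hl'] [l'0 [hm hm']].
case: (ltngtP l l') => // h.
  by have := hm' l; rewrite l0 h => /(_ isT).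
by have := hl' l'; rewrite l'0 h => /(_ isT).
Qed.

Lemma cg_nat_eq (D a b : nat) : (a < D)%N -> (b < D)%N -> cg D a b -> a = b.
Proof.
move=> ha hb [q hq].
have hq' : (a : int) = (b : int) + q * (D : int) by rewrite -hq; ring.
have [h|[h|h]] : (1 <= q \/ q = 0 \/ q <= -1)%R by lia.
- have : ((D:int) <= q * D)%R by rewrite -{1}(mul1r (D:int)); apply: ler_wpM2r.
  lia.
- rewrite h mul0r addr0 in hq'; lia.
- have : (q * D <= - (D:int))%R.
    by rewrite -mulN1r; apply: ler_wpM2r.
  lia.
Qed.

Lemma cg_nat_mod (D a b : nat) : (0 < D)%N -> cg D a b -> (a %% D = b %% D)%N.
Proof.
move=> D0 [q hq].
have hq' : (a : int) = (b : int) + q * (D : int) by rewrite -hq; ring.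
apply/eqP; rewrite -eqz_nat -!modz_nat hq'.
by rewrite addrC modzMDl.
Qed.

Lemma cg_modn (D a : nat) : cg D (a %% D)%N a.
Proof.
exists (- Posz (a %/ D)%N).
rewrite {2}(divn_eq a D) PoszD PoszM; ring.
Qed.

Lemma res_S n x : res n.+1 x = (res n x + x n * 2 ^ n)%N.
Proof. by rewrite /res big_ord_recr. Qed.

Lemma res0 x : res 0 x = 0%N.
Proof. by rewrite /res big_ord0. Qed.

Lemma res_lt n x : (res n x < 2 ^ n)%N.
Proof.
elim: n => [|n IH]; first by rewrite res0.
rewrite res_S expnS; case: (x n) => /=; lia.
Qed.

Lemma res_add L j x : exists q, res (L + j) x = (res L x + 2 ^ L * q)%N.
Proof.
elim: j => [|j [q hq]]; first by exists 0%N; rewrite addn0 muln0 addn0.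
exists (q + x (L + j) * 2 ^ j)%N.
by rewrite addnS res_S hq expnD; ring.
Qed.

Lemma res_mod k n x : (k <= n)%N -> (res n x %% 2 ^ k = res k x)%N.
Proof.
move=> h; have [q hq] := res_add k (n - k) x.
rewrite subnKC // in hq; rewrite hq.
by rewrite addnC mulnC modnMDl modn_small // res_lt.
Qed.

Lemma res_eq n x y : res n x = res n y <-> (forall i, (i < n)%N -> x i = y i).
Proof.
elim: n => [|n IH]; first by rewrite !res0; split => // _ i.
rewrite !res_S; split.
  move=> h.
  have h1 := res_lt n x; have h2 := res_lt n y.
  have [e1 e2] : res n x = res n y /\ x n = y n.
    move: h; case: (x n); case: (y n) => /=; lia.
  move=> i; rewrite ltnS leq_eqVlt; case/orP => [/eqP -> //|].
  by move/IH: e1; apply.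
move=> h; have -> : res n x = res n y by apply/IH => i hi; apply: h; lia.
by rewrite h.
Qed.

Lemma res_Z2zero n : res n Z2zero = 0%N.
Proof. by rewrite /res big1. Qed.

Lemma fn_spec m L K a : (L <= K)%N ->
  (fn m L a < 2 ^ L)%N /\ cg (2 ^ L)%N (fn m L a) (FF (res K m) a).
Proof.
move=> LK.
have P0 : (0 < 2 ^ L)%N by rewrite expn_gt0.
split; first by rewrite /fn; lia.
set E := ((a : int) ^+ 2 + (1 - 4 * (res L m : int)) * a).
have hE : (fn m L a : int) = (E %% (2 ^ L)%N)%Z.
  rewrite /fn -/E gez0_abs // modz_ge0 //; lia.
rewrite hE; apply: (@cg_trans _ _ E).
  exists (- (E %/ (2 ^ L)%N)%Z); rewrite {2}(divz_eq E (2 ^ L)%N); ring.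
have [q hq] := res_add L (K - L) m; rewrite subnKC // in hq.
rewrite hq /E /FF PoszD PoszM.
exists (4 * (q : int) * a); ring.
Qed.

Lemma iter_link (g : nat -> nat) (G : int -> int) (D : nat) :
  (forall a b, cg D a b -> cg D (G a) (G b)) ->
  (forall a, (g a < D)%N /\ cg D (g a) (G a)) ->
  forall t y, (y < D)%N -> (iter t g y < D)%N /\ cg D (iter t g y) (iter t G y).
Proof.
move=> HG Hg; elim=> [|t IH] y hy /=; first by split => //; exact: cg_refl.
have [h1 h2] := IH y hy.
have [h3 h4] := Hg (iter t g y).
split => //; apply: cg_trans h4 _; exact: HG.
Qed.

Lemma iter_fn m L K t y : (L <= K)%N -> (y < 2 ^ L)%N ->
  (iter t (fn m L) y < 2 ^ L)%N /\ cg (2 ^ L)%N (iter t (fn m L) y) (iter t (FF (res K m)) y).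
Proof.
move=> LK hy; apply: iter_link => //.
  by move=> a b; apply: FF_cg.
by move=> a; apply: fn_spec.
Qed.

Lemma iter_fn_eq m L K t y : (L <= K)%N -> (y < 2 ^ L)%N ->
  (iter t (fn m L) y = y <-> cg (2 ^ L)%N (iter t (FF (res K m)) y) y).
Proof.
move=> LK hy; have [h1 h2] := @iter_fn m L K t y LK hy; split.
  by move=> e; apply: cg_trans (cg_sym h2) _; rewrite e; exact: cg_refl.
by move=> h; apply: cg_nat_eq h1 hy _; apply: cg_trans h2 h.
Qed.

Lemma vz_cg e u w : vz e (u - w) -> cg (2 ^ e)%N u w.
Proof. by case=> c hc; exists (2 * c + 1); rewrite hc pow2z; ring. Qed.

Lemma vz_cgle e e' u w : (e' <= e)%N -> vz e (u - w) -> cg (2 ^ e')%N u w.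
Proof.
move=> h /vz_cg; rewrite !pow2z; exact: cg_pow.
Qed.

Lemma vz_not e u w : vz e (u - w) -> cg (2 ^ e.+1)%N u w -> False.
Proof.
case=> c hc [q hq]; rewrite hc pow2z exprSr mulrA in hq.
have : (2 * c + 1) = q * 2.
  apply: (@mulfI _ ((2:int) ^+ e)); first by rewrite expf_neq0.
  by rewrite hq; ring.
lia.
Qed.

Section TypeI.
Variables (m : Z2) (n a k K0 : nat).
Hypothesis Hball : forall K, (K0 <= K)%N -> forall x : int, cg (2 ^ n)%N x a ->
  (exists c, x = 2 * c) /\ vz (n + k) (x * (x - 4 * (res K m : int))).
Hypothesis hnk : (2 <= n + k)%N.

Lemma ball_cg y : (y %% 2 ^ n = a)%N -> cg (2 ^ n)%N y a.
Proof. by move=> h; rewrite -h; apply: cg_sym; apply: cg_modn. Qed.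

Lemma fixed_lemma L y : (L <= n + k)%N -> (y < 2 ^ L)%N -> (y %% 2 ^ n = a)%N ->
  fn m L y = y.
Proof.
move=> hL hy hya.
have LK : (L <= L + K0)%N by rewrite leq_addr.
have := @iter_fn_eq m L (L + K0) 1 y LK hy; rewrite /= => ->.
have [_ hv] := Hball (leq_addl L K0) (ball_cg hya).
apply: (vz_cgle hL).
by move: hv; rewrite /FF; congr vz; ring.
Qed.

Lemma period_lemma L y : (n + k <= L)%N -> (y < 2 ^ L)%N -> (y %% 2 ^ n = a)%N ->
  exact_period (fn m L) (2 ^ (L - (n + k))) y.
Proof.
move=> hL hy hya.
have LK : (L <= L + K0)%N by rewrite leq_addr.
have [hx hv] := Hball (leq_addl L K0) (ball_cg hya).
have hc := core hnk hx hv.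
set s := (L - (n + k))%N.
have hS : forall t, iter t (fn m L) y = y <-> cg (2 ^ L)%N (iter t (FF (res (L + K0) m)) y) y.
  by move=> t; apply: iter_fn_eq.
have Htop : cg (2 ^ L)%N (iter (2 ^ s) (FF (res (L + K0) m)) y) y.
  apply: vz_cg; have := hc s; rewrite /s subnKC //.
split; first by rewrite expn_gt0.
split; first by apply/hS.
move=> j /andP[j0 js] /hS hj.
case s0: (s == 0)%N.
  by move/eqP: s0 js => ->; lia.
apply: (@no_small_period (FF (res (L + K0) m)) (2 ^ L)%N y _ s Htop _ _ j _ hj).
- by move=> u w; apply: FF_cg.
- lia.
- move=> h; apply: (@vz_not (n + k + s.-1)).
    exact: hc.
  by have -> : (n + k + s.-1).+1 = L by rewrite /s; lia.
- by apply/andP.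
Qed.

Lemma typeI_gen : (a < 2 ^ n)%N -> typeI m n a k.
Proof.
move=> ha; split => //.
- by apply: fixed_lemma => //; [lia | rewrite modn_small].
- move=> j b l jk hb hper hab.
  have hba : (b %% 2 ^ n = a)%N by have := hab 0%N; rewrite /=; apply; case: hper.
  have hfix : fn m (n + j) b = b by apply: fixed_lemma => //; lia.
  have l1 : l = 1%N.
    apply: (exact_period_uniq hper); split => //; split => //; lia.
  subst l => y [hy [j' hj' hyj]].
  have j0 : j' = 0%N by lia.
  subst j'.
  move: hyj => /= hyj.
  have hya : (y %% 2 ^ n = a)%N.
    rewrite -hba -hyj; apply/esym/modn_dvdm; apply: dvdn_exp2l; lia.
  have hf : fn m (n + j).+1 y = y by apply: fixed_lemma => //; lia.
  split => //; split => //; lia.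
- move=> N b l hN hb hper hab.
  have hba : (b %% 2 ^ n = a)%N by have := hab 0%N; rewrite /=; apply; case: hper.
  have := period_lemma hN hb hba => hp.
  have el := exact_period_uniq hper hp; subst l.
  move=> y [hy [j' hj' hyj]].
  have hya : (y %% 2 ^ n = a)%N.
    rewrite -(hab j' hj') -hyj; apply/esym/modn_dvdm; apply: dvdn_exp2l; lia.
  have -> : (2 * 2 ^ (N - (n + k)) = 2 ^ (N.+1 - (n + k)))%N.
    by rewrite subSn // expnS.
  apply: period_lemma => //; lia.
Qed.
End TypeI.

Lemma vz_of_cg e x : cg (2 ^ e.+1)%N x (2 ^ e)%N -> vz e x.
Proof.
case=> q hq; exists q.
have -> : x = (x - Posz (2 ^ e)) + Posz (2 ^ e) by ring.
rewrite hq !pow2z exprS; ring.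
Qed.

Lemma vz_mul a b x y : vz a x -> vz b y -> vz (a + b) (x * y).
Proof.
case=> u hu [w hw]; exists (2 * u * w + u + w).
rewrite hu hw exprD; ring.
Qed.

Lemma vz_add a b x y : (a < b)%N -> vz a x -> vz b y -> vz a (x + y).
Proof.
move=> ab [u hu] [w hw]; exists (u + 2 ^+ (b - a.+1) * (2 * w + 1)).
rewrite hu hw.
have -> : b = (a + (b - a.+1).+1)%N by lia.
rewrite exprD exprS.
have -> : (a + (b - a.+1).+1 - a.+1)%N = (b - a.+1)%N by lia.
ring.
Qed.

Lemma vz_opp a x : vz a x -> vz a (- x).
Proof. case=> u hu; exists (- u - 1); rewrite hu; ring. Qed.

Lemma vz_4 e x : vz e x -> vz e.+2 (4 * x).
Proof. case=> u hu; exists u; rewrite hu !exprS; ring. Qed.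

Lemma vz_even e x : (1 <= e)%N -> vz e x -> exists c, x = 2 * c.
Proof.
move=> h [u hu]; exists (2 ^+ e.-1 * (2 * u + 1)).
by rewrite hu -{1}(prednK h) exprS; ring.
Qed.

Lemma vz_eq e e' x : e = e' -> vz e x -> vz e' x.
Proof. by move=> ->. Qed.

Lemma vz_M m v K : is_v2 m v -> (v < K)%N -> vz v (res K m).
Proof.
move=> [hv1 hv2] hK; apply: vz_of_cg.
have e1 : (res K m %% 2 ^ v.+1 = 2 ^ v)%N.
  rewrite res_mod // res_S.
  have -> : res v m = res v Z2zero by apply (proj2 (res_eq _ _ _)) => i hi; rewrite hv2.
  by rewrite res_Z2zero hv1 add0n mul1n.
rewrite -e1; apply: cg_sym; exact: cg_modn.
Qed.

Lemma res_cg n K m : (n <= K)%N -> cg (2 ^ n)%N (res n m) (res K m).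
Proof.
move=> h; have [q hq] := res_add n (K - n) m; rewrite subnKC // in hq.
by exists (- (q : int)); rewrite hq PoszD PoszM; ring.
Qed.

Section Balls.
Variables (m : Z2) (v : nat).
Hypothesis hv : is_v2 m v.

Lemma ballE1 n : (2 <= n < v + 3)%N ->
  forall K, (n + v.+1 <= K)%N -> forall x : int, cg (2 ^ n)%N x (c1 n) ->
  (exists c, x = 2 * c) /\ vz (n + (n - 2)) (x * (x - 4 * (res K m : int))).
Proof.
case: n => [|e] // /andP[h1 h2] K hK x hx.
have vx : vz e x by apply: vz_of_cg; exact: hx.
split; first by apply: (vz_even _ vx); lia.
have vM : vz v.+2 (4 * (res K m : int)) by apply: vz_4; apply: vz_M => //; lia.
apply: (@vz_eq (e + e)); first by lia.
apply: vz_mul => //.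
apply: (vz_add _ vx (vz_opp vM)); lia.
Qed.

Lemma ballE2 n : (v + 3 < n)%N ->
  forall K, (n + v.+1 <= K)%N -> forall x : int, cg (2 ^ n)%N x (c1 n) ->
  (exists c, x = 2 * c) /\ vz (n + v.+1) (x * (x - 4 * (res K m : int))).
Proof.
case: n => [|e] // h1 K hK x hx.
have vx : vz e x by apply: vz_of_cg; exact: hx.
split; first by apply: (vz_even _ vx); lia.
have vM : vz v.+2 (4 * (res K m : int)) by apply: vz_4; apply: vz_M => //; lia.
apply: (@vz_eq (e + v.+2)); first by lia.
apply: vz_mul => //; rewrite addrC.
apply: (vz_add _ (vz_opp vM) vx); lia.
Qed.

Lemma ballE3 n : (v + 3 < n)%N ->
  forall K, (n + v.+1 <= K)%N -> forall x : int, cg (2 ^ n)%N x (c3 m n) ->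
  (exists c, x = 2 * c) /\ vz (n + v.+1) (x * (x - 4 * (res K m : int))).
Proof.
case: n => [|e] // h1 K hK x hx.
have vM : vz v.+2 (4 * (res K m : int)) by apply: vz_4; apply: vz_M => //; lia.
have h3 : cg (2 ^ e.+1)%N (c3 m e.+1) (4 * res e.+1 m + 2 ^ e)%N by apply: cg_modn.
have h4 := @res_cg e.+1 K m (ltac:(lia)).
have vd : vz e (x - 4 * (res K m : int)).
  apply: vz_of_cg.
  case: hx => q1 e1; case: h3 => q2 e2; case: h4 => q3 e3.
  exists (q1 + q2 + 4 * q3).
  move: e2; rewrite PoszD PoszM => e2.
  have -> : x - 4 * (res K m : int) - Posz (2 ^ e) =
    (x - Posz (c3 m e.+1)) + (Posz (c3 m e.+1) - (Posz 4%N * Posz (res e.+1 m) + Posz (2 ^ e))) + 4 * (Posz (res e.+1 m) - Posz (res K m))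
    by ring.
  rewrite e1 e2 e3; ring.
have vx : vz v.+2 x.
  have -> : x = 4 * (res K m : int) + (x - 4 * (res K m : int)) by ring.
  apply: (vz_add _ vM vd); lia.
split; first by apply: (vz_even _ vx); lia.
apply: (@vz_eq (v.+2 + e)); first by lia.
exact: vz_mul.
Qed.
End Balls.

Lemma fn_lt m n a : (fn m n a < 2 ^ n)%N.
Proof. by case: (@fn_spec m n n a (leqnn n)). Qed.

Lemma cg_shrink (n : nat) x y : cg (2 ^ n.+1)%N x y -> cg (2 ^ n)%N x y.
Proof. by rewrite expnS mulnC PoszM => /cg_dvd. Qed.

Lemma fn_mod m n a : (fn m n.+1 a %% 2 ^ n = fn m n (a %% 2 ^ n))%N.
Proof.
have [_ h1] := @fn_spec m n.+1 n.+1 a (leqnn _).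
have [h2 h3] := @fn_spec m n n.+1 (a %% 2 ^ n) (leqnSn _).
rewrite -(modn_small h2); apply: cg_nat_mod; first by rewrite expn_gt0.
apply: cg_trans (cg_shrink h1) _; apply: cg_trans (cg_sym h3).
apply: FF_cg; apply: cg_sym; exact: cg_modn.
Qed.

Lemma res_fZ2 m x n : res n (fZ2 m x) = fn m n (res n x).
Proof.
elim: n => [|n IH].
  by rewrite res0; have := fn_lt m 0 (res 0 x); rewrite expn0; lia.
rewrite res_S IH /fZ2.
set Q := fn m n.+1 (res n.+1 x).
have hQ : (Q < 2 ^ n.+1)%N by apply: fn_lt.
have hm : (Q %% 2 ^ n = fn m n (res n x))%N by rewrite /Q fn_mod res_mod.
have hd : (Q %/ 2 ^ n < 2)%N by rewrite ltn_divLR ?expn_gt0 // -expnS.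
rewrite [in RHS](divn_eq Q (2 ^ n)) hm.
by case: (Q %/ 2 ^ n)%N hd => [|[|]] //= _; rewrite addnC.
Qed.

Lemma streq x y : (forall n, res n x = res n y) -> x = y.
Proof.
move=> h; apply: functional_extensionality => i.
by have /res_eq := h i.+1; apply.
Qed.

Lemma res_mul4 m n : res n (mul4 m) = (4 * res n m %% 2 ^ n)%N.
Proof.
case: n => [|[|n]].
- by rewrite res0 expn0 modn1.
- rewrite res_S res0 /mul4 /= expn1.
  by rewrite (_ : 4 * _ = (2 * res 1 m) * 2)%N ?modnMl //; ring.
have -> : res n.+2 (mul4 m) = (4 * res n m)%N.
  elim: n => [|n IH]; first by rewrite !res_S !res0 /mul4 /=; lia.
  rewrite res_S IH res_S /mul4 /= (_ : (n.+2 - 2 = n)%N); last by lia.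
  by rewrite !expnS; ring.
rewrite (_ : 2 ^ n.+2 = 4 * 2 ^ n)%N; last by rewrite !expnS; ring.
rewrite -muln_modr res_mod //; lia.
Qed.

Lemma mul4_cg m n : cg (2 ^ n)%N (res n (mul4 m)) (4 * res n m)%N.
Proof. rewrite res_mul4; exact: cg_modn. Qed.

Lemma odd_cancel (u W q : int) k : (2 * u + 1) * W = q * 2 ^+ k ->
  exists q', W = q' * 2 ^+ k.
Proof.
elim: k q W => [|k IH] q W h.
  by exists W; rewrite expr0 mulr1.
have [q' hq'] : exists q', W = q' * 2 ^+ k.
  by apply: (IH (q * 2)); rewrite h exprS; ring.
have h2 : (2 * u + 1) * q' = q * 2.
  apply: (@mulIf _ (2 ^+ k)); first by rewrite expf_neq0.
  by rewrite -mulrA -hq' h exprS; ring.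
exists (q - u * q'); rewrite hq' exprS.
have e : q' = (q - u * q') * 2.
  have -> : (q - u * q') * 2 = q * 2 - 2 * u * q' by ring.
  by rewrite -h2; ring.
rewrite {1}e; ring.
Qed.

Lemma fn_fix_cg m n a : (a < 2 ^ n)%N -> cg (2 ^ n)%N (FF (res n m) a) a -> fn m n a = a.
Proof.
move=> ha h; have [h1 h2] := @fn_spec m n n a (leqnn n).
exact: cg_nat_eq h1 ha (cg_trans h2 h).
Qed.

Lemma fix0 m : fZ2 m Z2zero = Z2zero.
Proof.
apply: streq => n; rewrite res_fZ2 res_Z2zero; apply: fn_fix_cg; first by rewrite expn_gt0.
by exists 0; rewrite /FF; ring.
Qed.

Lemma fix4 m : fZ2 m (mul4 m) = mul4 m.
Proof.
apply: streq => n; rewrite res_fZ2; apply: fn_fix_cg; first exact: res_lt.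
case: (mul4_cg m n) => q hq; exists (q * Posz (res n (mul4 m))).
rewrite /FF.
have -> : Posz (res n (mul4 m)) ^+ 2 + (1 - 4 * Posz (res n m)) * Posz (res n (mul4 m))
   - Posz (res n (mul4 m)) = Posz (res n (mul4 m)) * (Posz (res n (mul4 m)) - Posz (4 * res n m)%N)
  by rewrite PoszM; ring.
by rewrite hq; ring.
Qed.

Lemma neq04 m v : is_v2 m v -> Z2zero <> mul4 m.
Proof.
case=> hv _ /(congr1 (fun f => f v.+2)); rewrite /mul4 /Z2zero /=.
rewrite (_ : (v.+2 - 2 = v)%N) ?hv //; lia.
Qed.

Lemma res_first x e : x e = true -> (forall j, (j < e)%N -> x j = false) ->
  res e.+1 x = (2 ^ e)%N.
Proof.
move=> h1 h2; rewrite res_S.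
have -> : res e x = res e Z2zero by apply (proj2 (res_eq _ _ _)) => i hi; rewrite h2.
by rewrite res_Z2zero h1 add0n mul1n.
Qed.

Lemma fix_uniq m x : fZ2 m x = x -> x = Z2zero \/ x = mul4 m.
Proof.
move=> hx.
case: (classic (exists i, x i = true)) => [ex|nex]; last first.
  left; apply: functional_extensionality => i; case e: (x i) => //.
  by exfalso; apply: nex; exists i.
right.
have ex' : exists i, x i by case: ex => i hi; exists i; rewrite hi.
case: (ex_minnP ex') => e he hmin.
apply: functional_extensionality => i.
set n := (e + i.+1)%N.
have Fx : fn m n (res n x) = res n x by rewrite -res_fZ2 hx.
have [_ c1] := @fn_spec m n n (res n x) (leqnn n).
rewrite Fx in c1.
have vX : vz e (res n x).
  apply: vz_of_cg.
  rewrite -(res_first he); last first.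
    move=> j hj; case e1: (x j) => //; have := hmin j; rewrite e1 => /(_ isT); lia.
  rewrite -(res_mod x (_ : e.+1 <= n)%N); last by rewrite /n; lia.
  apply: cg_sym; exact: cg_modn.
case: vX => u hu; case: c1 => q hq.
have h3 : (2 * u + 1) * (Posz (res n x) - 4 * Posz (res n m)) = (- q) * 2 ^+ i.+1.
  apply: (@mulfI _ (2 ^+ e)); first by rewrite expf_neq0.
  have -> : 2 ^+ e * ((2 * u + 1) * (Posz (res n x) - 4 * Posz (res n m)))
     = (2 ^+ e * (2 * u + 1)) * (Posz (res n x) - 4 * Posz (res n m)) by ring.
  rewrite -hu.
  have -> : Posz (res n x) * (Posz (res n x) - 4 * Posz (res n m)) =
    - (Posz (res n x) - FF (res n m) (res n x)) by rewrite /FF; ring.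
  by rewrite hq pow2z /n exprD; ring.
case: (odd_cancel h3) => q' hq'.
have c2 : cg (2 ^ i.+1)%N (res n x) (res n (mul4 m)).
  case: (mul4_cg m n) => q2 hq2.
  exists (q' - q2 * 2 ^+ e).
  have -> : Posz (res n x) - Posz (res n (mul4 m)) =
     (Posz (res n x) - 4 * Posz (res n m)) - (Posz (res n (mul4 m)) - Posz (4 * res n m)%N)
    by rewrite PoszM; ring.
  by rewrite hq' hq2 !pow2z /n exprD; ring.
have := cg_nat_mod (expn_gt0 2 i.+1) c2.
rewrite !res_mod; try (rewrite /n; lia).
by move/res_eq; apply.
Qed.

Lemma odd_even m x : res 1 x = 1%N -> res 1 (fZ2 m x) = 0%N.
Proof.
move=> h; rewrite res_fZ2 h.
have [h1 h2] := @fn_spec m 1 1 1 (leqnn 1).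
apply: (cg_nat_eq h1) => //.
apply: cg_trans h2 _; exists (1 - 2 * (res 1 m : int)); rewrite /FF expn1; ring.
Qed.

Definition first1 (x : Z2) e := x e = true /\ forall j, (j < e)%N -> x j = false.
Definition diffat (x y : Z2) e := (forall j, (j < e)%N -> x j = y j) /\ x e <> y e.

Lemma res1_0 x : res 1 x = 0%N <-> x 0%N = false.
Proof. rewrite res_S res0 expn0 muln1 add0n; by case: (x 0%N). Qed.

Lemma ball_c1 e x : ball e.+1 (c1 e.+1) x <-> first1 x e.
Proof.
rewrite /ball /c1 /=; split; last by case=> h1 h2; apply: res_first.
rewrite res_S => h.
have hl := res_lt e x.
have [h1 h2] : res e x = 0%N /\ x e = true by move: h; case: (x e) => /=; lia.
split => // j hj.
have : res e x = res e Z2zero by rewrite res_Z2zero.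
by move/res_eq => /(_ j hj).
Qed.

Lemma ball_c3 m e x : ball e.+1 (c3 m e.+1) x <-> diffat x (mul4 m) e.
Proof.
have key : c3 m e.+1 = (res e (mul4 m) + (~~ mul4 m e) * 2 ^ e)%N.
  rewrite /c3 /= -modnDml -res_mul4 res_S.
  have hl := res_lt e (mul4 m).
  case: (mul4 m e) => /=.
    rewrite mul1n mul0n addn0 -addnA addnn -mul2n -expnS modnDr modn_small //.
    by rewrite expnS; lia.
  by rewrite mul0n addn0 mul1n modn_small // expnS; lia.
rewrite /ball key res_S.
have h1 := res_lt e x; have h2 := res_lt e (mul4 m).
split.
  move=> h.
  have [e1 e2] : res e x = res e (mul4 m) /\ x e = ~~ mul4 m e.
    by move: h; case: (x e); case: (mul4 m e) => /=; lia.
  split; first by move/res_eq: e1.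
  by rewrite e2; case: (mul4 m e).
case=> hb hne.
have -> : res e x = res e (mul4 m) by apply/res_eq.
by move: hne; case: (x e); case: (mul4 m e).
Qed.

Lemma first1_uniq x e e' : first1 x e -> first1 x e' -> e = e'.
Proof.
case=> a1 a2 [b1 b2]; case: (ltngtP e e') => // h.
  by rewrite b2 in a1.
by rewrite a2 in b1.
Qed.

Lemma diffat_uniq x y e e' : diffat x y e -> diffat x y e' -> e = e'.
Proof.
case=> a1 a2 [b1 b2]; case: (ltngtP e e') => // h.
  by have := b1 e h.
by have := a1 e' h.
Qed.

Lemma diffat_first x y f d : first1 y f -> diffat x y d -> (f < d)%N -> first1 x f.
Proof.
case=> h1 h2 [d1 _] fd; split; first by rewrite d1.
by move=> j hj; rewrite d1 ?h2 //; lia.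
Qed.

Lemma first1_zero e : first1 Z2zero e -> False.
Proof. by case. Qed.

Lemma diffat_self y d : diffat y y d -> False.
Proof. by case. Qed.

Lemma y_first m v : is_v2 m v -> first1 (mul4 m) v.+2.
Proof.
case=> h1 h2; split.
  by rewrite /mul4 /= (_ : (v.+2 - 2 = v)%N) //; lia.
move=> j hj; rewrite /mul4; case: ifP => // hj2.
apply: h2; lia.
Qed.

Definition info (v : nat) (m : Z2) (l : piece_lbl) (x : Z2) : Prop :=
  match l with
  | L04 => x = Z2zero \/ x = mul4 m
  | L1 n => first1 x n.-1 /\ (2 <= n < v + 3)%N
  | L2 n => first1 x n.-1 /\ (v + 3 < n)%N
  | L3 n => first1 x v.+2 /\ diffat x (mul4 m) n.-1 /\ (v + 3 < n)%N
  end.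

Lemma get_info m v l x : is_v2 m v -> valid_lbl v l -> piece m l x -> info v m l x.
Proof.
move=> hv; case: l => [|n|n|n] /= hl hp //.
- by case: n hl hp => [|n] hl // /ball_c1.
- by case: n hl hp => [|n] hl // /ball_c1.
- case: n hl hp => [|n] hl //= /ball_c3 hd; split => //.
  apply: (diffat_first (y_first hv) hd); lia.
Qed.

Lemma disjoint m v (hv : is_v2 m v) l l' x :
  valid_lbl v l -> valid_lbl v l' -> piece m l x -> piece m l' x -> l = l'.
Proof.
move=> hl hl' hp hp'.
have i1 := get_info hv hl hp; have i2 := get_info hv hl' hp'.
have yf := y_first hv.
case: l {hl hp} i1 => [|n|n|n] /= i1; case: l' {hl' hp'} i2 => [|n'|n'|n'] /= i2 //.
- case: i1 => ?; subst x; case: i2 => h1 h2; first by case: (first1_zero h1).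
  have := first1_uniq yf h1; lia.
- case: i1 => ?; subst x; case: i2 => h1 h2; first by case: (first1_zero h1).
  have := first1_uniq yf h1; lia.
- case: i1 => ?; subst x; case: i2 => [h1 [h2 h3]]; first by case: (first1_zero h1).
  by case: (diffat_self h2).
- case: i2 => ?; subst x; case: i1 => h1 h2; first by case: (first1_zero h1).
  have := first1_uniq yf h1; lia.
- case: i1 => h1 h2; case: i2 => h3 h4; have := first1_uniq h1 h3.
  by move=> e; congr L1; lia.
- case: i1 => h1 h2; case: i2 => h3 h4; have := first1_uniq h1 h3; lia.
- case: i1 => h1 h2; case: i2 => h3 h4; have := first1_uniq h1 h3; lia.
- case: i2 => ?; subst x; case: i1 => h1 h2; first by case: (first1_zero h1).
  have := first1_uniq yf h1; lia.
- case: i1 => h1 h2; case: i2 => h3 h4; have := first1_uniq h1 h3; lia.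
- case: i1 => h1 h2; case: i2 => h3 h4; have := first1_uniq h1 h3.
  by move=> e; congr L2; lia.
- case: i1 => h1 h2; case: i2 => h3 h4; have := first1_uniq h1 h3; lia.
- case: i2 => ?; subst x; case: i1 => [h1 [h2 h3]]; first by case: (first1_zero h1).
  by case: (diffat_self h2).
- case: i1 => h1 h2; case: i2 => h3 h4; have := first1_uniq h1 h3; lia.
- case: i1 => h1 h2; case: i2 => h3 h4; have := first1_uniq h1 h3; lia.
- case: i1 => h1 [h2 h3]; case: i2 => h4 [h5 h6].
  have := diffat_uniq h2 h5; by move=> e; congr L3; lia.
Qed.

Lemma cover m v (hv : is_v2 m v) x :
  res 1 x = 0%N <-> exists l, valid_lbl v l /\ piece m l x.
Proof.
rewrite res1_0; split; last first.
  case=> l [hl hp]; have := get_info hv hl hp.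
  case: l {hl hp} => [|n|n|n] /=.
  - by case=> ->.
  - by case=> [[_ h] hn]; apply: h; lia.
  - by case=> [[_ h] hn]; apply: h; lia.
  - by case=> [[_ h] _]; apply: h.
move=> x0.
case: (classic (exists i, x i = true)) => [ex|nex]; last first.
  exists L04; split => //; left; apply: functional_extensionality => i.
  case e: (x i) => //; by exfalso; apply: nex; exists i.
have ex' : exists i, x i by case: ex => i hi; exists i; rewrite hi.
case: (ex_minnP ex') => e he hmin.
have hf : first1 x e.
  split => // j hj; case e1: (x j) => //; have := hmin j; rewrite e1 => /(_ isT); lia.
have e0 : (0 < e)%N by case: e he {hmin hf} => //; rewrite x0.
case: (ltngtP e v.+2) => he2.
- exists (L1 e.+1); split; first by rewrite /=; lia.
  by apply/ball_c1.
- exists (L2 e.+1); split; first by rewrite /=; lia.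
  by apply/ball_c1.
subst e.
case: (classic (exists i, x i <> mul4 m i)) => [ey|ney]; last first.
  exists L04; split => //; right; apply: functional_extensionality => i.
  case: (boolP (x i == mul4 m i)) => [/eqP //|/eqP hne].
  by exfalso; apply: ney; exists i.
have ey' : exists i, x i != mul4 m i by case: ey => i hi; exists i; apply/eqP.
case: (ex_minnP ey') => d hd hdmin.
have yf := y_first hv.
have hdv : (v.+2 < d)%N.
  case: (ltnP v.+2 d) => // hle; exfalso; move/eqP: hd; apply.
  case: hf => a1 a2; case: yf => b1 b2.
  case: (ltngtP d v.+2) hle => // h _; last by subst d; rewrite a1 b1.
  by rewrite a2 ?b2.
exists (L3 d.+1); split; first by rewrite /=; lia.
apply/ball_c3; split; last by apply/eqP.
move=> j hj; case: (boolP (x j == mul4 m j)) => [/eqP //|hne].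
by have := hdmin j hne; lia.
Qed.

Local Close Scope ring_scope.

Theorem theorem6p3 (m : Z2) (v : nat) (hm : m <> Z2zero) (hv : is_v2 m v) :
  [/\ (* fixed points: exactly 0 and 4m, which are distinct *)
      [/\ fZ2 m Z2zero = Z2zero, fZ2 m (mul4 m) = mul4 m, Z2zero <> mul4 m &
          forall x, fZ2 m x = x -> x = Z2zero \/ x = mul4 m],
      (* f(1 + 2Z_2) is contained in 2Z_2 *)
      (forall x, res 1 x = 1 -> res 1 (fZ2 m x) = 0),
      (* 2Z_2 is the disjoint union of {0,4m} and the balls forming E1, E2, E3 *)
      (forall x, res 1 x = 0 <-> exists l, valid_lbl v l /\ piece m l x),
      (forall l l' x, valid_lbl v l -> valid_lbl v l' -> piece m l x -> piece m l' x -> l = l') &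
      (* types of the balls *)
      [/\ forall n, 2 <= n < v + 3 -> typeI m n (c1 n) (n - 2),
          forall n, v + 3 < n -> typeI m n (c1 n) (v + 1) &
          forall n, v + 3 < n -> typeI m n (c3 m n) (v + 1)]].
Proof.
split.
- split; [exact: fix0 | exact: fix4 | exact: neq04 hv | exact: fix_uniq].
- exact: odd_even.
- exact: cover hv.
- exact: disjoint hv.
split.
- move=> n hn; apply: (@typeI_gen m n (c1 n) (n - 2) (n + v.+1)).
  + exact: ballE1 hv n hn.
  + lia.
  + rewrite /c1; case: n hn => // n _ /=; rewrite expnS; have := expn_gt0 2 n; lia.
- move=> n hn; apply: (@typeI_gen m n (c1 n) (v + 1) (n + v.+1)).
  + by move=> K hK x hx; rewrite addn1; apply: (ballE2 hv hn hK hx).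
  + lia.
  + rewrite /c1; case: n hn => // n _ /=; rewrite expnS; have := expn_gt0 2 n; lia.
- move=> n hn; apply: (@typeI_gen m n (c3 m n) (v + 1) (n + v.+1)).
  + by move=> K hK x hx; rewrite addn1; apply: (ballE3 hv hn hK hx).
  + lia.
  + by rewrite /c3 ltn_pmod // expn_gt0.
Qed.
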